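(* Let $E=\{ax^4+by^4+cx^2y^2: a,b,c\in\mathbb{R}\}$, viewed as polynomials on $\ell_\infty^2$ with the sup norm over $[-1,1]^2$. Then $$\sup\{\Phi_{4,2}(P): P\in E,\ \|P\|\le 1\}=\left[2+6\left(\tfrac12\right)^{8/5}\right]^{5/8}\approx 2.371,$$ and this supremum is attained at $P=\pm(x^4+y^4-3x^2y^2)$. In particular $L_{\mathbb{R},4}\ge L_{\mathbb{R},4}(\ell_\infty^2)\ge\left[2+6(1/2)^{8/5}\right]^{5/8}\approx2.371$.
   Context: All spaces are real. $\check P$ denotes the polar of an $m$-homogeneous polynomial $P$ (the unique symmetric $m$-linear form with $\check P(x,\dots,x)=P(x)$). $\ell_\infty^n$ is $\mathbb{R}^n$ with sup norm, and for a polynomial on $\ell_\infty^n$, $\|P\|=\sup_{x\in[-1,1]^n}|P(x)|$. For $P$ $m$-homogeneous on $\ell_\infty^n$, $\Phi_{m,n}(P)=\big(\sum_{i_1,\dots,i_m=1}^n|\check P(e_{i_1},\dots,e_{i_m})|^{\frac{2m}{m+1}}\big)^{\frac{m+1}{2m}}$ and $L_{\mathbb{R},m}(\ell_\infty^n)=\sup\{\Phi_{m,n}(P):\|P\|\le1\}$. For $x_1,\dots,x_N$ in a Banach space $X$, $\|(x_j)\|_{w,1}=\sup\{\sum_j|\varphi(x_j)|:\varphi\in X',\|\varphi\|\le1\}$. $L_{\mathbb{R},m}$ is the smallest constant $L$ such that for every real Banach space $X$, every continuous $m$-homogeneous $P:X\to\mathbb{R}$, every $N$ and all $x^{(k)}_j\in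 X$: $\big(\sum_{j_1,\dots,j_m=1}^N|\check P(x^{(1)}_{j_1},\dots,x^{(m)}_{j_m})|^{\frac{2m}{m+1}}\big)^{\frac{m+1}{2m}}\le L\|P\|\prod_{k=1}^m\|(x^{(k)}_j)_{j=1}^N\|_{w,1}$. *)

(* Defs.v *)
From Stdlib Require Import Reals.
Open Scope R_scope.

Definition rpow (t s : R) : R := if Req_EM_T t 0 then 0 else Rpower t s.

(* Points of R^2 = ell_infty^2 are functions x : nat -> R, coordinates x 0, x 1.
   The basis vectors e_1, e_2 are indexed by 0, 1. *)
Definition sum2 (f : nat -> R) : R := f 0%nat + f 1%nat.

(* A 4-linear form on R^2 is given by its values T i j k l = A(e_i,e_j,e_k,e_l),
   i,j,k,l in {0,1}:  A(x1,..,x4) = sum T i j k l x1_i x2_j x3_k x4_l. *)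
Definition form4 (T : nat -> nat -> nat -> nat -> R) (x1 x2 x3 x4 : nat -> R) : R :=
  sum2 (fun i => sum2 (fun j => sum2 (fun k => sum2 (fun l =>
    T i j k l * x1 i * x2 j * x3 k * x4 l)))).

(* Symmetry of the 4-linear form (invariance under adjacent transpositions,
   which generate all permutations), checked on basis vectors. *)
Definition sym4 (T : nat -> nat -> nat -> nat -> R) : Prop :=
  forall i j k l,
    T i j k l = T j i k l /\ T i j k l = T i k j l /\ T i j k l = T i j l k.

(* The 4-homogeneous polynomial P(x) = A(x,x,x,x); if T is symmetric then A is
   the polar of P, i.e. T i j k l = polar(P)(e_i,e_j,e_k,e_l). *)
Definition poly4 (T : nat -> nat -> nat -> nat -> R) (x : nat -> R) : R :=
  form4 T x x x x.

Definition norm_le1 (P : (nat -> R) -> R) : Prop :=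
  forall x : nat -> R, -1 <= x 0%nat <= 1 -> -1 <= x 1%nat <= 1 -> Rabs (P x) <= 1.

Definition Phi42 (T : nat -> nat -> nat -> nat -> R) : R :=
  rpow (sum2 (fun i => sum2 (fun j => sum2 (fun k => sum2 (fun l =>
    rpow (Rabs (T i j k l)) (8/5)))))) (5/8).

Definition in_E (P : (nat -> R) -> R) : Prop :=
  exists a b c : R, forall x : nat -> R,
    P x = a * x 0%nat ^ 4 + b * x 1%nat ^ 4 + c * x 0%nat ^ 2 * x 1%nat ^ 2.

Definition P0 (x : nat -> R) : R :=
  x 0%nat ^ 4 + x 1%nat ^ 4 - 3 * x 0%nat ^ 2 * x 1%nat ^ 2.

Definition Vconst : R := rpow (2 + 6 * rpow (1/2) (8/5)) (5/8).

(* Main.v *)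
Require Import Defs.
From Stdlib Require Import Reals Lra Lia Psatz.
Open Scope R_scope.

Lemma rpow_ge0 t s : 0 <= rpow t s.
Proof. unfold rpow; destruct (Req_EM_T t 0). lra. unfold Rpower; left; apply exp_pos. Qed.

Lemma rpow_le x y s : 0 <= s -> 0 <= x <= y -> rpow x s <= rpow y s.
Proof.
  intros Hs Hxy. unfold rpow at 1. destruct (Req_EM_T x 0).
  - apply rpow_ge0.
  - unfold rpow; destruct (Req_EM_T y 0). lra.
    apply Rle_Rpower_l; lra.
Qed.

Lemma abs_inv x a : Rabs x <= a -> -a <= x <= a.
Proof. unfold Rabs; destruct Rcase_abs; lra. Qed.

Lemma rpow0 s : rpow 0 s = 0.
Proof. unfold rpow; destruct (Req_EM_T 0 0); lra. Qed.

Lemma rpow1 s : rpow 1 s = 1.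
Proof. unfold rpow; destruct (Req_EM_T 1 0). lra. unfold Rpower; rewrite ln_1, Rmult_0_r; apply exp_0. Qed.

Ltac symall H :=
  let go i j k l := (let h := fresh in pose proof (H i j k l) as h; destruct h as [? [? ?]]) in
  go 0%nat 0%nat 0%nat 0%nat; go 0%nat 0%nat 0%nat 1%nat; go 0%nat 0%nat 1%nat 0%nat; go 0%nat 0%nat 1%nat 1%nat;
  go 0%nat 1%nat 0%nat 0%nat; go 0%nat 1%nat 0%nat 1%nat; go 0%nat 1%nat 1%nat 0%nat; go 0%nat 1%nat 1%nat 1%nat;
  go 1%nat 0%nat 0%nat 0%nat; go 1%nat 0%nat 0%nat 1%nat; go 1%nat 0%nat 1%nat 0%nat; go 1%nat 0%nat 1%nat 1%nat;
  go 1%nat 1%nat 0%nat 0%nat; go 1%nat 1%nat 0%nat 1%nat; go 1%nat 1%nat 1%nat 0%nat; go 1%nat 1%nat 1%nat 1%nat.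

Section S.
Variable T : nat -> nat -> nat -> nat -> R.
Hypothesis HT : sym4 T.

Lemma canon :
  T 0 0 1 0 = T 0 0 0 1 /\ T 0 1 0 0 = T 0 0 0 1 /\ T 1 0 0 0 = T 0 0 0 1 /\
  T 0 1 0 1 = T 0 0 1 1 /\ T 0 1 1 0 = T 0 0 1 1 /\ T 1 0 0 1 = T 0 0 1 1 /\
  T 1 0 1 0 = T 0 0 1 1 /\ T 1 1 0 0 = T 0 0 1 1 /\
  T 1 0 1 1 = T 0 1 1 1 /\ T 1 1 0 1 = T 0 1 1 1 /\ T 1 1 1 0 = T 0 1 1 1.
Proof. symall HT. repeat split; congruence. Qed.

Lemma poly4_exp x : poly4 T x =
  T 0 0 0 0 * x 0%nat ^ 4 + 4 * T 0 0 0 1 * x 0%nat ^ 3 * x 1%nat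
  + 6 * T 0 0 1 1 * x 0%nat ^ 2 * x 1%nat ^ 2 + 4 * T 0 1 1 1 * x 0%nat * x 1%nat ^ 3
  + T 1 1 1 1 * x 1%nat ^ 4.
Proof.
  destruct canon as (e1&e2&e3&e4&e5&e6&e7&e8&e9&e10&e11).
  unfold poly4, Defs.form4, sum2. rewrite e1,e2,e3,e4,e5,e6,e7,e8,e9,e10,e11. ring.
Qed.

Lemma Phi_exp : Phi42 T = rpow (rpow (Rabs (T 0 0 0 0)) (8/5) + rpow (Rabs (T 1 1 1 1)) (8/5)
   + 6 * rpow (Rabs (T 0 0 1 1)) (8/5) + 4 * rpow (Rabs (T 0 0 0 1)) (8/5)
   + 4 * rpow (Rabs (T 0 1 1 1)) (8/5)) (5/8).
Proof.
  destruct canon as (e1&e2&e3&e4&e5&e6&e7&e8&e9&e10&e11).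
  unfold Phi42, sum2. rewrite e1,e2,e3,e4,e5,e6,e7,e8,e9,e10,e11. f_equal. ring.
Qed.

Lemma extract a b c : (forall x, poly4 T x = a * x 0%nat ^ 4 + b * x 1%nat ^ 4 + c * x 0%nat ^ 2 * x 1%nat ^ 2) ->
  T 0 0 0 0 = a /\ T 1 1 1 1 = b /\ T 0 0 1 1 = c / 6 /\ T 0 0 0 1 = 0 /\ T 0 1 1 1 = 0.
Proof.
  intros H.
  pose proof (H (fun n => if Nat.eqb n 0 then 1 else 0)) as h1.
  pose proof (H (fun n => if Nat.eqb n 0 then 0 else 1)) as h2.
  pose proof (H (fun n => if Nat.eqb n 0 then 1 else 1)) as h3.
  pose proof (H (fun n => if Nat.eqb n 0 then 1 else -1)) as h4.
  pose proof (H (fun n => if Nat.eqb n 0 then 2 else 1)) as h5.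
  pose proof (H (fun n => if Nat.eqb n 0 then 2 else -1)) as h6.
  rewrite poly4_exp in h1, h2, h3, h4, h5, h6. simpl in h1, h2, h3, h4, h5, h6.
  repeat split; lra.
Qed.
End S.

Definition T0 (s : R) (i j k l : nat) : R :=
  match (i + j + k + l)%nat with 0%nat => s | 2%nat => - s / 2 | 4%nat => s | _ => 0 end.

Lemma T0_sym s : sym4 (T0 s).
Proof.
  intros i j k l; unfold T0; repeat split;
  [ replace (j + i + k + l)%nat with (i + j + k + l)%nat by lia
  | replace (i + k + j + l)%nat with (i + j + k + l)%nat by lia
  | replace (i + j + l + k)%nat with (i + j + k + l)%nat by lia ]; reflexivity.
Qed.

Lemma T0_poly s x : poly4 (T0 s) x = s * P0 x.
Proof. unfold poly4, Defs.form4, sum2, T0, P0; simpl. field. Qed.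

Lemma P0_bound x : -1 <= x 0%nat <= 1 -> -1 <= x 1%nat <= 1 -> Rabs (P0 x) <= 1.
Proof.
  intros h0 h1. unfold P0.
  set (u := x 0%nat ^ 2). set (v := x 1%nat ^ 2).
  assert (0 <= u <= 1) by (unfold u; split; nra).
  assert (0 <= v <= 1) by (unfold v; split; nra).
  replace (x 0%nat ^ 4) with (u * u) by (unfold u; ring).
  replace (x 1%nat ^ 4) with (v * v) by (unfold v; ring).
  replace (3 * x 0%nat ^ 2 * x 1%nat ^ 2) with (3 * u * v) by (unfold u, v; ring).
  assert (u * v <= 1) by nra.
  assert (0 <= u * v) by nra.
  apply Rabs_le. split; [pose proof (pow2_ge_0 (u - v)); nra|].
  destruct (Rle_dec u v).
  - assert (u * u <= u * v) by nra. nra.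
  - assert (v * v <= u * v) by nra. nra.
Qed.

Lemma attain s T : (s = 1 \/ s = -1) -> sym4 T -> (forall x, poly4 T x = s * P0 x) ->
  norm_le1 (poly4 T) /\ Phi42 T = Vconst.
Proof.
  intros Hs HT H. split.
  - intros x h0 h1. rewrite H, Rabs_mult.
    replace (Rabs s) with 1 by (destruct Hs; subst; unfold Rabs; destruct Rcase_abs; lra).
    rewrite Rmult_1_l. apply P0_bound; auto.
  - destruct (extract T HT s s (-3 * s)) as (a1&a2&a3&a4&a5).
    { intros x; rewrite H; unfold P0; ring. }
    rewrite Phi_exp by exact HT. rewrite a1,a2,a3,a4,a5.
    replace (Rabs s) with 1 by (destruct Hs; subst; unfold Rabs; destruct Rcase_abs; lra).
    replace (Rabs (-3 * s / 6)) with (1/2) by (destruct Hs; subst; unfold Rabs; destruct Rcase_abs; lra).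
    rewrite Rabs_R0, rpow0, rpow1. unfold Vconst. f_equal. ring.
Qed.

Theorem mainTheorem3 :
  (* sup { Phi_{4,2}(P) : P in E, ||P|| <= 1 } = Vconst *)
  is_lub (fun r => exists T, sym4 T /\ in_E (poly4 T) /\ norm_le1 (poly4 T)
                             /\ r = Phi42 T) Vconst
  (* attained at P = x^4 + y^4 - 3x^2y^2 and at its negative *)
  /\ (forall s : R, (s = 1 \/ s = -1) ->
        (exists T, sym4 T /\ forall x, poly4 T x = s * P0 x)
        /\ (forall T, sym4 T -> (forall x, poly4 T x = s * P0 x) ->
              norm_le1 (poly4 T) /\ Phi42 T = Vconst))
  (* L_{R,4}(ell_infty^2) >= Vconst: every upper bound of Phi_{4,2} over the
     unit ball of 4-homogeneous polynomials on ell_infty^2 is >= Vconst *)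
  /\ (forall L : R,
        (forall T, sym4 T -> norm_le1 (poly4 T) -> Phi42 T <= L) ->
        Vconst <= L).
Proof.
  assert (A1 := attain 1 (T0 1) (or_introl eq_refl) (T0_sym 1) (T0_poly 1)).
  split; [split|split].
  - intros r [T [HT [[a [b [c Hx]]] [Hn ->]]]].
    destruct (extract T HT a b c Hx) as (a1&a2&a3&a4&a5).
    rewrite Phi_exp by exact HT. rewrite a1,a2,a3,a4,a5, Rabs_R0, rpow0. unfold Vconst.
    pose proof (Hn (fun n => if Nat.eqb n 0 then 1 else 0) ltac:(simpl; lra) ltac:(simpl; lra)) as n1.
    pose proof (Hn (fun n => if Nat.eqb n 0 then 0 else 1) ltac:(simpl; lra) ltac:(simpl; lra)) as n2.
    pose proof (Hn (fun n => if Nat.eqb n 0 then 1 else 1) ltac:(simpl; lra) ltac:(simpl; lra)) as n3.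
    rewrite Hx in n1, n2, n3. simpl in n1, n2, n3.
    apply abs_inv in n1. apply abs_inv in n2. apply abs_inv in n3.
    apply rpow_le; [lra|]. split.
    { pose proof (rpow_ge0 (Rabs a) (8/5)). pose proof (rpow_ge0 (Rabs b) (8/5)).
      pose proof (rpow_ge0 (Rabs (c/6)) (8/5)). lra. }
    assert (rpow (Rabs a) (8/5) <= 1).
    { rewrite <- (rpow1 (8/5)). apply rpow_le; [lra|]. split; [apply Rabs_pos|apply Rabs_le; lra]. }
    assert (rpow (Rabs b) (8/5) <= 1).
    { rewrite <- (rpow1 (8/5)). apply rpow_le; [lra|]. split; [apply Rabs_pos|apply Rabs_le; lra]. }
    assert (rpow (Rabs (c/6)) (8/5) <= rpow (1/2) (8/5)).
    { apply rpow_le; [lra|]. split; [apply Rabs_pos|apply Rabs_le; lra]. }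
    lra.
  - intros b Hb. destruct A1 as [An Ap]. rewrite <- Ap. apply Hb.
    exists (T0 1). split; [apply T0_sym|]. split; [|split; auto].
    exists 1, 1, (-3). intros x; rewrite T0_poly; unfold P0; ring.
  - intros s Hs. split.
    + exists (T0 s). split; [apply T0_sym|apply T0_poly].
    + intros T HT H. exact (attain s T Hs HT H).
  - intros L HL. destruct A1 as [An Ap]. rewrite <- Ap. apply HL; [apply T0_sym|exact An].
Qed.
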